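(* Let $1\le N\le M$ and let $u_1,\dots,u_N$ satisfy the genericity conditions: pairwise distinct, $au_j+b\neq0$, $eu_j+f\neq0$, $tu_j\neq u_k$ for $j\neq k$. Let $\mathcal{C}_N^{(1)},\dots,\mathcal{C}_N^{(N)}$ be any $2^N\times2^N$ matrices with $\sum_j\mathcal{C}_N^{(j)}=\mathcal{C}_N$ satisfying, for all $j$ and $k\neq j$, $\mathcal{C}_N^{(j)}\mathcal{A}_N=\frac{eu_j+f}{au_j+b}\mathcal{A}_N\mathcal{C}_N^{(j)}$, $(\mathcal{C}_N^{(j)})^2=0$, $\mathcal{C}_N^{(j)}\mathcal{C}_N^{(k)}=\frac{(eu_j+f)(au_k+b)(u_j-tu_k)}{(au_j+b)(eu_k+f)(tu_j-u_k)}\mathcal{C}_N^{(k)}\mathcal{C}_N^{(j)}$ (such matrices exist). Set \[K=\prod_{j=1}^N\Big(\frac{au_j+b}{eu_j+f}\Big)^j\,\mathrm{Tr}\big[Q\,\mathcal{A}_N^{M-N}\mathcal{C}_N^{(N)}\cdots\mathcal{C}_N^{(1)}\big].\] Then for every particle configuration $1\le x_1<\dots<x_N\le M$, \[\langle x_1\cdots x_N|B(u_N)\cdots B(u_1)|\Omega\rangle=K\sum_{\sigma\in S_N}\prod_{(j,k)\in\mathrm{Inv}(\sigma)}\frac{u_{\sigma(k)}-tu_{\sigma(j)}}{tu_{\sigma(k)}-u_{\sigma(j)}}\prod_{j=1}^N\Big(\frac{eu_{\sigma(j)}+f}{au_{\sigma(j)}+b}\Big)^{x_j}.\]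
   Context: Fix complex parameters $t,a,b,c,d,e,f$, all nonzero, with $t\neq1$, satisfying $cd+af=0$ and $tcd+be=0$. The $L$-operator $L_{aj}(u)$ on $W_a\otimes V_j$ ($W_a\cong V_j\cong\mathbb{C}^2$ with basis $|0\rangle,|1\rangle$) has matrix elements $[L(u)]^{\gamma\delta}_{\alpha\beta}={}_a\langle\gamma|{}_j\langle\delta|L_{aj}(u)|\alpha\rangle_a|\beta\rangle_j$: $[L]^{00}_{00}=au+b$, $[L]^{01}_{01}=atu+b$, $[L]^{01}_{10}=(1-t)cu$, $[L]^{10}_{01}=(1-t)d$, $[L]^{10}_{10}=eu+f$, $[L]^{11}_{11}=eu+tf$, all others $0$. Monodromy $T_a(u)=L_{aM}(u)\cdots L_{a1}(u)$, $B(u)={}_a\langle0|T_a(u)|1\rangle_a$. $|\Omega\rangle=|0\rangle^{\otimes M}$; $|x_1\cdots x_N\rangle$ has $|1\rangle$ at sites $x_j$ and $|0\rangle$ elsewhere; bras are duals. For $\sigma\in S_N$, $\mathrm{Inv}(\sigma)=\{(j,k):j<k,\ \sigma(j)>\sigma(k)\}$. $X\otimes Y$ is the Kronecker product $(X_{ik}Y)_{i,k}$. The matrices $\mathcal{A}_n,\mathcal{C}_n$ are defined by $\mathcal{A}_1=\mathrm{diag}(au_1+b,eu_1+f)$, $\mathcal{C}_1=\begin{pmatrix}0&(1-t)cu_1\\0&0\end{pmatrix}$, $\mathcal{A}_{n+1}=\mathrm{diag}(au_{n+1}+b,eu_{n+1}+f)\otimes\mathcal{A}_n+\begin{pmatrix}0&0\\(1-t)d&0\end{pmatrix}\otimes\mathcal{C}_n$,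 $\mathcal{C}_{n+1}=\begin{pmatrix}0&(1-t)cu_{n+1}\\0&0\end{pmatrix}\otimes\mathcal{A}_n+\mathrm{diag}(atu_{n+1}+b,eu_{n+1}+tf)\otimes\mathcal{C}_n$. Rows/columns of $2^N\times 2^N$ matrices are indexed by $(i_N,\dots,i_1)\in\{0,1\}^N$ consistent with this Kronecker structure (index $0$ first in each factor); $Q$ is the $2^N\times2^N$ matrix with a single entry $1$ in row $(1,\dots,1)$, column $(0,\dots,0)$, and zeros elsewhere (i.e. $Q=|1^N\rangle\langle0^N|$). *)

(* Defs.v *)
From HB Require Import structures.
From mathcomp Require Import all_boot all_order all_algebra all_fingroup.
Set Implicit Arguments. Unset Strict Implicit. Unset Printing Implicit Defensive.
Import Order.TTheory GRing.Theory Num.Theory.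
Local Open Scope ring_scope.

Section Defs.
Variable R : numClosedFieldType.

(* The L-operator: Lent t a b c d e f u g dl al be = [L(u)]^{g dl}_{al be}
   (g = gamma, dl = delta, al = alpha, be = beta; false = |0>, true = |1>). *)
Definition Lent (t a b c d e f u : R) (g dl al be : bool) : R :=
  match al, be, g, dl with
  | false, false, false, false => a * u + b
  | false, true,  false, true  => a * t * u + b
  | true,  false, false, true  => (1 - t) * c * u
  | false, true,  true,  false => (1 - t) * d
  | true,  false, true,  false => e * u + f
  | true,  true,  true,  true  => e * u + t * f
  | _, _, _, _ => 0
  end.

(* Basis states of V_1 (x) ... (x) V_M : occupation functions; site s+1 <-> s : 'I_M. *)
Definition state (M : nat) := {ffun 'I_M -> bool}.

(* Matrix elements of the monodromy T_a(u) = L_{aM}(u) ... L_{a1}(u):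
   monod ... u y x g al = <g|_a <y| T_a(u) |al>_a |x>.
   Obtained by multiplying in the L-operators of sites 1, 2, ..., M in turn
   (L_{a1} is rightmost), summing over the intermediate auxiliary index. *)
Definition monod (t a b c d e f : R) (M : nat) (u : R) (y x : state M)
    : bool -> bool -> R :=
  foldl (fun (T : bool -> bool -> R) (s : 'I_M) =>
           fun g al => \sum_(cc : bool) Lent t a b c d e f u g (y s) cc (x s) * T cc al)
        (fun g al => (g == al)%:R) (enum 'I_M).

(* Matrix elements of B(u) = <0|_a T_a(u) |1>_a :  <y|B(u)|x>. *)
Definition Bel (t a b c d e f : R) (M : nat) (u : R) (y x : state M) : R :=
  monod t a b c d e f u y x false true.

(* Components of B(u_n) ... B(u_1) |Omega>  (spectral parameters u_j = u (j-1)). *)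
Fixpoint Bvec (t a b c d e f : R) (M : nat) (u : nat -> R) (n : nat) : state M -> R :=
  match n with
  | 0 => fun y => (y == [ffun => false])%:R
  | n'.+1 => fun y => \sum_(x : state M) Bel t a b c d e f (u n') y x * Bvec t a b c d e f u n' x
  end.

(* |x_1 ... x_N> : |1> at the sites x_j (1-based), |0> elsewhere. *)
Definition config (M N : nat) (x : 'I_N -> nat) : state M :=
  [ffun s : 'I_M => [exists j : 'I_N, x j == (s : nat).+1]].

Definition kron2 (p : nat) (X : 'M[R]_2) (Y : 'M[R]_p) : 'M[R]_(p + p) :=
  block_mx (X ord0 ord0 *: Y) (X ord0 ord_max *: Y)
           (X ord_max ord0 *: Y) (X ord_max ord_max *: Y).

Lemma expS2 (n : nat) : (2 ^ n + 2 ^ n)%N = (2 ^ n.+1)%N.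
Proof. by rewrite addnn -mul2n expnS. Qed.

Definition mx2 (p q r s : R) : 'M[R]_2 :=
  \matrix_(i < 2, j < 2)
    if (i : nat) == 0%N then (if (j : nat) == 0%N then p else q)
    else (if (j : nat) == 0%N then r else s).

(* AC n = (A_n, C_n) with A_0 = 1, C_0 = 0 (which reproduces the paper's A_1, C_1);
   level n+1 uses u_{n+1} = u n. *)
Fixpoint AC (t a b c d e f : R) (u : nat -> R) (n : nat) : 'M[R]_(2 ^ n) * 'M[R]_(2 ^ n) :=
  match n with
  | 0 => (1%:M, 0)
  | n'.+1 =>
      let A := (AC t a b c d e f u n').1 in
      let C := (AC t a b c d e f u n').2 in
      let v := u n' in
      (castmx (expS2 n', expS2 n')
         (kron2 (mx2 (a * v + b) 0 0 (e * v + f)) A + kron2 (mx2 0 0 ((1 - t) * d) 0) C),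
       castmx (expS2 n', expS2 n')
         (kron2 (mx2 0 ((1 - t) * c * v) 0 0) A + kron2 (mx2 (a * t * v + b) 0 0 (e * v + t * f)) C))
  end.

Definition Amx t a b c d e f u n := (AC t a b c d e f u n).1.
Definition Cmx t a b c d e f u n := (AC t a b c d e f u n).2.

(* Q = |1^N><0^N| : row (1,...,1) has index 2^N - 1, column (0,...,0) index 0. *)
Definition Qmx (N : nat) : 'M[R]_(2 ^ N) :=
  \matrix_(i, j) (((i : nat) == (2 ^ N).-1) && ((j : nat) == 0%N))%:R.

(* Product C^{(N)} C^{(N-1)} ... C^{(1)} (C^{(j)} = Cj (j-1)). *)
Definition Cprod (N : nat) (Cj : 'I_N -> 'M[R]_(2 ^ N)) : 'M[R]_(2 ^ N) :=
  foldr (fun j acc => Cj j *m acc) 1%:M (rev (enum 'I_N)).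

(* Matrix power X^k for a (not necessarily n.+1-indexed) square matrix. *)
Definition mxpow (p : nat) (X : 'M[R]_p) (k : nat) : 'M[R]_p := iter k (mulmx X) 1%:M.

End Defs.
Arguments Qmx {R} N.

(* Main.v *)
Require Import Defs.
From HB Require Import structures.
From mathcomp Require Import all_boot all_order all_algebra all_fingroup.
From mathcomp Require Import ring zify.
Import Order.TTheory GRing.Theory Num.Theory.
Local Open Scope ring_scope.
Set Implicit Arguments. Unset Strict Implicit. Unset Printing Implicit Defensive.

Section Gen.
Variable R : numClosedFieldType.

Lemma index_enum_enum (T : finType) : index_enum T = enum T.
Proof. by rewrite -(deprecated_filter_index_enum predT) filter_predT. Qed.

Lemma rev_enum_ord M : rev (enum 'I_M) = map (@rev_ord M) (enum 'I_M).
Proof.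
apply: (@inj_map _ _ val val_inj); rewrite map_rev val_enum_ord -map_comp.
apply: (@eq_from_nth _ 0%N); first by rewrite size_rev size_map size_iota size_enum_ord.
move=> i; rewrite size_rev size_iota => Hi.
rewrite nth_rev ?size_iota // nth_iota; last by rewrite subnSK ?leq_subr.
rewrite (nth_map (Ordinal Hi)) ?size_enum_ord //= nth_enum_ord //.
Qed.

Lemma prod_rev_enum (T : pzSemiRingType) M (G : 'I_M -> T) :
  \prod_(s <- rev (enum 'I_M)) G s = \prod_(i < M) G (rev_ord i).
Proof. by rewrite rev_enum_ord big_map index_enum_enum. Qed.

Lemma distr_rev (T : pzSemiRingType) M (J : finType) (H : 'I_M -> J -> T) :
  \prod_(s <- rev (enum 'I_M)) \sum_(j : J) H s j
  = \sum_(f : {ffun 'I_M -> J}) \prod_(s <- rev (enum 'I_M)) H s (f s).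
Proof.
rewrite prod_rev_enum bigA_distr_bigA /=.
pose h (f : {ffun 'I_M -> J}) := [ffun i => f (rev_ord i)].
have hinj : injective h.
  move=> f g /ffunP E; apply/ffunP => i; have := E (rev_ord i).
  by rewrite !ffunE rev_ordK.
rewrite (reindex_inj hinj); apply: eq_bigr => f _.
by rewrite prod_rev_enum; apply: eq_bigr => i _; rewrite ffunE.
Qed.

Lemma prod_enum_nat (T : pzSemiRingType) M (G : nat -> T) :
  \prod_(s <- rev (enum 'I_M)) G (val s) = \prod_(m <- rev (iota 0 M)) G m.
Proof. by rewrite -(big_map val xpredT) map_rev val_enum_ord. Qed.

Lemma foldl_prod p (T : Type) (X : T -> 'M[R]_p) (l : seq T) (P0 : 'M[R]_p) :
  foldl (fun P s => X s *m P) P0 l = (\prod_(s <- rev l) X s) *m P0.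
Proof.
elim: l P0 => [|s l IH] P0 /=; first by rewrite big_nil mul1mx.
by rewrite IH rev_cons big_rcons /= -mulmxA.
Qed.

Lemma castmx_mul m m' (e : m = m') (A B : 'M[R]_m) :
  castmx (e, e) (A * B) = castmx (e, e) A * castmx (e, e) B.
Proof. by case: m' / e; rewrite !castmx_id. Qed.

Lemma castmx_one m m' (e : m = m') : castmx (e, e) (1 : 'M[R]_m) = 1.
Proof. by case: m' / e; rewrite !castmx_id. Qed.

Lemma castmx_prod m m' (e : m = m') (T : Type) (r : seq T) (F : T -> 'M[R]_m) :
  castmx (e, e) (\prod_(s <- r) F s) = \prod_(s <- r) castmx (e, e) (F s).
Proof.
elim: r => [|s r IH]; first by rewrite !big_nil castmx_one.
by rewrite !big_cons castmx_mul IH.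
Qed.

Lemma det_castmx m m' (e : m = m') (A : 'M[R]_m) : \det (castmx (e, e) A) = \det A.
Proof. by case: m' / e; rewrite castmx_id. Qed.

Lemma scAl p k (A B : 'M[R]_p) : k *: A * B = k *: (A * B).
Proof. by rewrite [RHS]scalemxAl. Qed.
Lemma scAr p k (A B : 'M[R]_p) : A * (k *: B) = k *: (A * B).
Proof. by rewrite [RHS]scalemxAr. Qed.

Lemma prod_scale p (T : Type) (r : seq T) (cf : T -> R) (X : T -> 'M[R]_p) :
  \prod_(i <- r) (cf i *: X i) = (\prod_(i <- r) cf i) *: \prod_(i <- r) X i.
Proof.
elim: r => [|i r IH]; first by rewrite !big_nil scale1r.
by rewrite !big_cons IH scAl scAr scalerA.
Qed.

Lemma rev_iotaS n : rev (iota 0 n.+1) = n :: rev (iota 0 n).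
Proof. by rewrite -addn1 iotaD rev_cat /= add0n. Qed.

Lemma prod_iotaS (F : nat -> R) n :
  \prod_(m <- iota 0 n.+1) F m = (\prod_(m <- iota 0 n) F m) * F n.
Proof. by rewrite -addn1 iotaD big_cat /= big_seq1 add0n. Qed.

End Gen.
Section Part1.
Variable R : numClosedFieldType.

Lemma mulE p (A B : 'M[R]_p) : A * B = A *m B. Proof. by []. Qed.

Lemma sum2 (F : 'I_2 -> R) : \sum_(k < 2) F k = F ord0 + F ord_max.
Proof. by rewrite big_ord_recr big_ord1 /=; congr (F _ + _); apply: val_inj. Qed.

Lemma prod_zero (T : pzSemiRingType) (I : eqType) (r : seq I) (F : I -> T) s :
  s \in r -> F s = 0 -> \prod_(i <- r) F i = 0.
Proof.
elim: r => [|i r IH] //; rewrite inE big_cons => /orP [/eqP <- -> | /IH H Fs].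
  by rewrite mul0r.
by rewrite H // mulr0.
Qed.

Definition b2o (g : bool) : 'I_2 := if g then ord_max else ord0.
Definition o2b (i : 'I_2) : bool := (i : nat) == 1%N.
Lemma o2bK g : o2b (b2o g) = g. Proof. by case: g. Qed.

Definition kidx p (g : bool) (i : 'I_p) : 'I_(p + p) :=
  if g then rshift p i else lshift p i.

Lemma kron2E p (X : 'M[R]_2) (Y : 'M[R]_p) g al i j :
  kron2 X Y (kidx g i) (kidx al j) = X (b2o g) (b2o al) * Y i j.
Proof.
by case: g; case: al;
  rewrite /kron2 /kidx ?block_mxEul ?block_mxEur ?block_mxEdl ?block_mxEdr mxE.
Qed.

Lemma kron_mul p (X Z : 'M[R]_2) (Y W : 'M[R]_p) :
  kron2 X Y * kron2 Z W = kron2 (X * Z) (Y * W).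
Proof.
rewrite /kron2 mulE mulmx_block !mulE !mxE !sum2.
by rewrite -!scalemxAl -!scalemxAr !scalerA -!scalerDl.
Qed.

Lemma kron_one p : kron2 (1 : 'M[R]_2) (1 : 'M[R]_p) = 1.
Proof.
rewrite /kron2 !mxE /= !scale1r !scale0r.
by rewrite [RHS](scalar_mx_block p p).
Qed.

Lemma kron_prod p (T : Type) (r : seq T) (X : T -> 'M[R]_2) (Y : T -> 'M[R]_p) :
  kron2 (\prod_(s <- r) X s) (\prod_(s <- r) Y s) = \prod_(s <- r) kron2 (X s) (Y s).
Proof.
elim: r => [|s r IH]; first by rewrite !big_nil kron_one.
by rewrite !big_cons -kron_mul IH.
Qed.

Lemma pow2_gt0 n : (0 < 2 ^ n)%N. Proof. by rewrite expn_gt0. Qed.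
Lemma pow2_pred n : ((2 ^ n).-1 < 2 ^ n)%N. Proof. by rewrite ltn_predL pow2_gt0. Qed.
Definition ord0n n : 'I_(2 ^ n) := Ordinal (pow2_gt0 n).
Definition ordLn n : 'I_(2 ^ n) := Ordinal (pow2_pred n).

Variables (t a b c d e f : R) (u : nat -> R) (M : nat).

Definition Lm (v : R) (dl be : bool) : 'M[R]_2 :=
  \matrix_(i < 2, j < 2) Lent t a b c d e f v (o2b i) dl (o2b j) be.

Lemma monod_gen (v : R) (y x : state M) l T0 (P0 : 'M[R]_2) :
  (forall g al, T0 g al = P0 (b2o g) (b2o al)) ->
  forall g al,
  foldl (fun (T : bool -> bool -> R) (s : 'I_M) =>
           fun g al => \sum_(cc : bool) Lent t a b c d e f v g (y s) cc (x s) * T cc al)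
        T0 l g al
  = ((\prod_(s <- rev l) Lm v (y s) (x s)) *m P0) (b2o g) (b2o al).
Proof.
elim: l T0 P0 => [|s l IH] T0 P0 HT g al /=; first by rewrite big_nil mul1mx HT.
rewrite (IH _ (Lm v (y s) (x s) *m P0)); first by rewrite rev_cons big_rcons -mulmxA.
move=> g' al'; rewrite mxE sum2 big_bool /= !mxE !o2bK /= addrC !HT.
by [].
Qed.

Lemma monod_eq (v : R) (y x : state M) g al :
  monod t a b c d e f v y x g al
  = (\prod_(s <- rev (enum 'I_M)) Lm v (y s) (x s)) (b2o g) (b2o al).
Proof.
rewrite /monod (@monod_gen v y x _ _ 1%:M) ?mulmx1 // => g' al'.
by rewrite mxE; case: g'; case: al'.
Qed.

Definition Sn n (bb : bool) : 'M[R]_(2 ^ n) :=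
  if bb then Cmx t a b c d e f u n else Amx t a b c d e f u n.

Definition Wn n (y : state M) := \prod_(s <- rev (enum 'I_M)) Sn n (y s).

Lemma Sn_succ n bb :
  Sn n.+1 bb = castmx (expS2 n, expS2 n)
                 (\sum_(b' : bool) kron2 (Lm (u n) bb b') (Sn n b')).
Proof.
rewrite big_bool /= addrC.
case: bb; rewrite /Sn /Cmx /Amx /=; congr castmx; congr (_ + _); congr kron2;
  apply/matrixP => i j; rewrite !mxE;
  case: i => [[|[|?]] ?] //; case: j => [[|[|?]] ?] //.
Qed.

Lemma ordL_cast n :
  cast_ord (esym (expS2 n)) (ordLn n.+1) = rshift (2 ^ n) (ordLn n).
Proof.
apply: val_inj; rewrite /= -expS2.
by have := pow2_gt0 n; lia.
Qed.

Lemma ord0_cast n :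
  cast_ord (esym (expS2 n)) (ord0n n.+1) = lshift (2 ^ n) (ord0n n).
Proof. by apply: val_inj. Qed.

Lemma P1 n (y : state M) :
  Bvec t a b c d e f u n y = Wn n y (ord0n n) (ordLn n).
Proof.
elim: n y => [|n IH] y.
  rewrite /= /Wn; case: eqP => [-> | Hy].
    rewrite (eq_bigr (fun _ => 1)) => [|s _]; last by rewrite ffunE.
    by rewrite big1_eq mxE.
  have [s Hs] : exists s, y s.
    apply/existsP; apply: contraNT (introN eqP Hy) => /existsPn H.
    by apply/eqP/ffunP => s; rewrite ffunE; apply/negbTE/H.
  rewrite (@prod_zero _ _ _ _ s) ?mxE ?mem_rev ?mem_enum //.
  by rewrite /Sn Hs.
rewrite /= /Wn.
under [LHS]eq_bigr => x _ do rewrite IH /Bel monod_eq /Wn -(kron2E _ _ false true) kron_prod.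
rewrite -summxE -(distr_rev (fun s bb => kron2 (Lm (u n) (y s) bb) (Sn n bb))).
have -> : \prod_(s <- rev (enum 'I_M)) Sn n.+1 (y s) = castmx (expS2 n, expS2 n)
    (\prod_(s <- rev (enum 'I_M)) \sum_(bb : bool) kron2 (Lm (u n) (y s) bb) (Sn n bb)).
  by rewrite castmx_prod; apply: eq_bigr => s _; exact: Sn_succ.
by rewrite castmxE /= ord0_cast ordL_cast.
Qed.

End Part1.
Section QC.
Variable R : numClosedFieldType.
Variables (p N : nat) (D : 'I_N -> 'M[R]_p) (th : 'I_N -> 'I_N -> R).
Hypothesis hDD : forall j k, j != k -> D j * D k = th j k *: (D k * D j).
Hypothesis hD0 : forall j, D j * D j = 0.

Definition decr (r : seq 'I_N) := sorted (fun i k : 'I_N => (k < i)%N) r.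

Lemma decr_cons k r : decr (k :: r) -> decr r /\ (forall i, i \in r -> (i < k)%N).
Proof.
move=> H; split; first exact: path_sorted H.
have tr : transitive (fun i k : 'I_N => (k < i)%N) by move=> y x z h1 h2; exact: ltn_trans h2 h1.
move=> i; have /allP := order_path_min tr H.
by move=> Ha /Ha.
Qed.

Lemma rep_zero (r : seq 'I_N) (P : pred 'I_N) j :
  decr r -> j \in r -> P j -> D j * \prod_(k <- r | P k) D k = 0.
Proof.
elim: r => [|k r IH] // Hs; have [Hr Hlt] := decr_cons Hs.
rewrite inE => /orP [/eqP -> | Hj] Pj.
  by rewrite big_cons Pj mulrA hD0 mul0r.
rewrite big_cons; case: ifP => Pk; last exact: IH.
have Hjk : j != k by apply/eqP => E; have := Hlt _ Hj; rewrite E ltnn.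
by rewrite mulrA hDD // scAl -mulrA IH // mulr0 scaler0.
Qed.

Lemma ins (r : seq 'I_N) (P : pred 'I_N) j :
  decr r -> j \in r -> ~~ P j ->
  D j * \prod_(k <- r | P k) D k
  = (\prod_(k <- r | P k && (j < k)%N) th j k) *: \prod_(k <- r | P k || (k == j)) D k.
Proof.
elim: r => [|k r IH] // Hs; have [Hr Hlt] := decr_cons Hs.
rewrite inE => /orP [/eqP Ejk | Hj] Pj.
  subst k; rewrite !big_cons (negbTE Pj) eqxx ltnn /=.
  have -> : \prod_(k <- r | P k && (j < k)%N) th j k = 1.
    by apply: big1_seq => i /andP [/andP [_ Hji] /Hlt Hij]; move: (ltn_trans Hji Hij); rewrite ltnn.
  rewrite scale1r; congr (D j * _).
  rewrite big_seq_cond [RHS]big_seq_cond; apply: eq_bigl => i.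
  case: (boolP (i \in r)) => //= Hi.
  have := Hlt _ Hi; case: (i =P j) => [->|_]; first by rewrite ltnn.
  by rewrite orbF.
have Hjk : (j < k)%N := Hlt _ Hj.
have Hkj : k != j by apply/eqP => E; rewrite E ltnn in Hjk.
rewrite !big_cons (negbTE Hkj) orbF Hjk andbT.
case: ifP => Pk; last by rewrite IH.
have Hjk' : j != k by rewrite eq_sym.
rewrite mulrA (hDD Hjk') scAl -mulrA (IH Hr Hj Pj) scAr scalerA.
by [].
Qed.

Fixpoint rho (js : seq 'I_N) : R :=
  match js with
  | [::] => 1
  | j :: js' => (\prod_(k <- rev (enum 'I_N) | (k \in js') && (j < k)%N) th j k) * rho js'
  end.

Lemma decr_rev_enum : decr (rev (enum 'I_N)).
Proof.
rewrite /decr rev_sorted.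
have := iota_ltn_sorted 0 N; rewrite -val_enum_ord sorted_map.
by [].
Qed.

Lemma word (js : seq 'I_N) :
  \prod_(j <- js) D j
  = if uniq js then rho js *: \prod_(k <- rev (enum 'I_N) | k \in js) D k else 0.
Proof.
elim: js => [|j js IH] /=.
  by rewrite big_nil big_pred0 ?scale1r // => k; rewrite in_nil.
rewrite big_cons IH; case: (boolP (uniq js)) => Hu; last by rewrite andbF mulr0.
rewrite andbT scAr; case: (boolP (j \in js)) => Hj /=.
  by rewrite rep_zero ?scaler0 // ?decr_rev_enum // mem_rev mem_enum.
rewrite ins ?decr_rev_enum ?mem_rev ?mem_enum // scalerA mulrC.
congr (_ *: _); apply: eq_bigl => k; by rewrite in_cons orbC.
Qed.

Lemma rho_pairs (s : 'S_N) (l : seq 'I_N) : decr l ->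
  rho (map s l) = \prod_(jk : 'I_N * 'I_N |
     [&& jk.1 \in l, jk.2 \in l, (jk.1 < jk.2)%N & (s jk.2 < s jk.1)%N])
     th (s jk.2) (s jk.1).
Proof.
elim: l => [|a l IH] Hs /=.
  by rewrite big_pred0 // => jk; rewrite in_nil.
have [Hl Hlt] := decr_cons Hs.
have Hal : a \notin l by apply/negP => /Hlt; rewrite ltnn.
rewrite IH // [RHS](bigID (fun jk : 'I_N * 'I_N => jk.2 == a)) /=.
congr (_ * _).
  rewrite big_rev -index_enum_enum (reindex_inj (@perm_inj _ s)) /=.
  rewrite (eq_bigl (fun jk : 'I_N * 'I_N => ((jk.1 \in l) && (s a < s jk.1)%N) && (jk.2 == a))).
    rewrite -(pair_big_dep (fun i => (i \in l) && (s a < s i)%N) (fun _ k => k == a)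
                (fun i k => th (s k) (s i))) /=.
    apply: eq_big => [i|i _]; first by rewrite (mem_map (@perm_inj _ s)).
    by rewrite big_pred1_eq.
  move=> [j k] /=; case: (k =P a) => [->|_]; rewrite ?andbF //= !andbT !inE ?eqxx /=.
  case: (boolP (j \in l)) => Hj; first by rewrite orbT (Hlt _ Hj).
  by rewrite orbF; case: (j =P a) => [->|]; rewrite ?ltnn.
apply: eq_bigl => [[j k]] /=; rewrite !inE.
case: (k =P a) => [->|_] /=; first by rewrite (negbTE Hal) !andbF.
case: (boolP (k \in l)) => Hk /=; last by rewrite !andbF.
have Hka := Hlt _ Hk.
case: (j =P a) => [->|_] /=; last by rewrite andbT.
by rewrite (negbTE Hal) ltnNge (ltnW Hka).
Qed.

Lemma rho_perm (s : 'S_N) :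
  rho (map s (rev (enum 'I_N)))
  = \prod_(jk : 'I_N * 'I_N | (jk.1 < jk.2)%N && (s jk.2 < s jk.1)%N) th (s jk.2) (s jk.1).
Proof.
rewrite rho_pairs ?decr_rev_enum //; apply: eq_bigl => jk.
by rewrite !mem_rev !mem_enum.
Qed.

End QC.
Section Main.
Variable R : numClosedFieldType.
Variables (t a b c d e f : R) (u : nat -> R).

Lemma det_Amx n :
  (forall m, (m < n)%N -> a * u m + b != 0 /\ e * u m + f != 0) ->
  \det (Amx t a b c d e f u n) != 0.
Proof.
elim: n => [|n IH] H; first by rewrite /Amx /= det1 oner_neq0.
rewrite /Amx /= det_castmx /kron2 add_block_mx !mxE /=.
rewrite !scale0r !addr0 !add0r det_lblock !detZ.
have [H1 H2] := H n (ltnSn n).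
have IH' := IH (fun m Hm => H m (ltnW Hm)).
by rewrite !mulf_neq0 ?expf_neq0.
Qed.

Variable N' : nat.
Local Notation N := N'.+1.
Variable Cj : 'I_N -> 'M[R]_(2 ^ N).
Hypothesis hab : forall j : 'I_N, a * u j + b != 0.
Hypothesis hef : forall j : 'I_N, e * u j + f != 0.
Hypothesis htu : forall j k : 'I_N, j != k -> t * u j != u k.
Local Notation A := (Amx t a b c d e f u N).
Definition rr (j : 'I_N) := (e * u j + f) / (a * u j + b).
Hypothesis hCA : forall j : 'I_N, Cj j *m A = rr j *: (A *m Cj j).
Hypothesis hCC : forall j : 'I_N, Cj j *m Cj j = 0.
Hypothesis hCjk : forall j k : 'I_N, j != k ->
     Cj j *m Cj k
     = ((e * u j + f) * (a * u k + b) * (u j - t * u k)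
        / ((a * u j + b) * (e * u k + f) * (t * u j - u k))) *: (Cj k *m Cj j).

Lemma rr_neq0 j : rr j != 0.
Proof. by rewrite /rr mulf_neq0 ?invr_eq0. Qed.

Lemma hA : A \in unitmx.
Proof.
rewrite unitmxE unitfE det_Amx // => m Hm.
by have := hab (Ordinal Hm); have := hef (Ordinal Hm).
Qed.

Local Notation Ai := (invmx A).
Lemma AiA : Ai * A = 1. Proof. exact: (mulVmx hA). Qed.
Lemma AAi : A * Ai = 1. Proof. exact: (mulmxV hA). Qed.

Definition Dm j := Cj j * Ai.
Definition thN (j k : 'I_N) := (u j - t * u k) / (t * u j - u k).

Lemma CA j : Cj j * A = rr j *: (A * Cj j). Proof. exact: hCA. Qed.

Lemma CD j : Cj j = Dm j * A.
Proof. by rewrite /Dm -mulrA AiA mulr1. Qed.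

Lemma AiC j : Ai * Cj j = rr j *: (Cj j * Ai).
Proof.
transitivity (Ai * (Cj j * A) * Ai); first by rewrite -!mulrA AAi mulr1.
by rewrite CA scAr scAl mulrA AiA mul1r.
Qed.

Lemma DA j : Dm j * A = rr j *: (A * Dm j).
Proof. by rewrite -CD /Dm mulrA -scAl -CA -mulrA AAi mulr1. Qed.

Lemma DD0 j : Dm j * Dm j = 0.
Proof.
rewrite /Dm mulrA -(mulrA (Cj j)) AiC scAr scAl mulrA.
by have -> : Cj j * Cj j = 0 := hCC j; rewrite !mul0r scaler0.
Qed.

Lemma DDk j k : j != k -> Dm j * Dm k = thN j k *: (Dm k * Dm j).
Proof.
move=> Hjk.
have E1 : Dm j * Dm k = (rr k * ((e * u j + f) * (a * u k + b) * (u j - t * u k)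
        / ((a * u j + b) * (e * u k + f) * (t * u j - u k)))) *: (Cj k * Cj j * Ai * Ai).
  rewrite /Dm mulrA -(mulrA (Cj j)) AiC scAr scAl mulrA.
  have -> : Cj j * Cj k = ((e * u j + f) * (a * u k + b) * (u j - t * u k)
        / ((a * u j + b) * (e * u k + f) * (t * u j - u k))) *: (Cj k * Cj j) := hCjk Hjk.
  by rewrite scAl scAl scalerA.
have E2 : Dm k * Dm j = rr j *: (Cj k * Cj j * Ai * Ai).
  by rewrite /Dm mulrA -(mulrA (Cj k)) AiC scAr scAl mulrA.
rewrite E1 E2 scalerA; congr (_ *: _).
have h1 := hab j; have h2 := hab k; have h3 := hef j; have h4 := hef k.
have h5 : t * u j - u k != 0 by rewrite subr_eq0 htu.
rewrite /rr /thN; field.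
by rewrite h1 h2 h4 h5.
Qed.

Lemma DAk j k : Dm j * A ^+ k = rr j ^+ k *: (A ^+ k * Dm j).
Proof.
elim: k => [|k IH]; first by rewrite !expr0 mulr1 mul1r scale1r.
rewrite exprS mulrA DA scAl -mulrA IH scAr scalerA mulrA.
by rewrite -exprS.
Qed.

Lemma AkD j k : A ^+ k * Dm j = (rr j ^+ k)^-1 *: (Dm j * A ^+ k).
Proof.
by rewrite DAk scalerA mulVf ?scale1r // expf_neq0 // rr_neq0.
Qed.

Variables (M : nat) (x : 'I_N -> nat).
Hypothesis hsum : \sum_(j < N) Cj j = Cmx t a b c d e f u N.
Hypothesis hx1 : forall j : 'I_N, (1 <= x j <= M)%N.
Hypothesis hxinc : forall j k : 'I_N, (j < k)%N -> (x j < x k)%N.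

Definition occ (m : nat) := [exists j : 'I_N, x j == m.+1].
Definition Xs (m : nat) := if occ m then Cmx t a b c d e f u N else A.
Definition Ys (m : nat) := if occ m then \sum_(j < N) rr j ^+ m.+1 *: Dm j else 1.
Definition Yt (j : 'I_N) := \sum_(k < N) rr k ^+ x j *: Dm k.

Lemma W1 n : \prod_(m <- rev (iota 0 n)) Xs m = A ^+ n * \prod_(m <- rev (iota 0 n)) Ys m.
Proof.
elim: n => [|n IH]; first by rewrite /= !big_nil expr0 mulr1.
rewrite rev_iotaS !big_cons IH /Xs /Ys; case: ifP => _; last by rewrite mul1r mulrA -exprS.
rewrite -hsum !big_distrl big_distrr /=; apply: eq_bigr => j _.
rewrite CD -!mulrA (mulrA A) -exprS mulrA -/(Dm j) (mulrA (Dm j)) DAk scAl scAl scAr mulrA.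
by [].
Qed.

Lemma occ_list : filter occ (iota 0 M) = map (fun j => (x j).-1) (enum 'I_N).
Proof.
apply: (irr_sorted_eq ltn_trans ltnn).
- exact: (sorted_filter ltn_trans _ (iota_ltn_sorted 0 M)).
- rewrite sorted_map.
  have := iota_ltn_sorted 0 N; rewrite -val_enum_ord sorted_map.
  apply: sub_sorted => i j /= Hij.
  have := hxinc Hij; have /andP [? ?] := hx1 i; have /andP [? ?] := hx1 j; lia.
move=> m; rewrite mem_filter mem_iota /=; apply/andP/mapP.
  move=> [/existsP [j /eqP Hj] _]; exists j; first by rewrite mem_enum.
  by rewrite Hj.
move=> [j _ ->]; have /andP [? ?] := hx1 j; split; last by lia.
by apply/existsP; exists j; rewrite prednK.
Qed.

Lemma W2 : \prod_(m <- rev (iota 0 M)) Ys m = \prod_(j <- rev (enum 'I_N)) Yt j.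
Proof.
rewrite /Ys -big_mkcond -big_filter filter_rev occ_list -map_rev big_map.
apply: eq_bigr => j _; rewrite prednK //.
by have /andP [? ?] := hx1 j.
Qed.

Lemma W3 : \prod_(j <- rev (enum 'I_N)) Yt j
  = \sum_(g : {ffun 'I_N -> 'I_N})
      (\prod_(j <- rev (enum 'I_N)) rr (g j) ^+ x j) *: \prod_(j <- rev (enum 'I_N)) Dm (g j).
Proof.
rewrite /Yt (distr_rev (fun j k => rr k ^+ x j *: Dm k)).
by apply: eq_bigr => g _; rewrite prod_scale.
Qed.

Definition DN := \prod_(k <- rev (enum 'I_N)) Dm k.

Lemma W4 (g : {ffun 'I_N -> 'I_N}) :
  \prod_(j <- rev (enum 'I_N)) Dm (g j)
  = if injectiveb g then rho thN (map g (rev (enum 'I_N))) *: DN else 0.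
Proof.
rewrite -(big_map g xpredT Dm) (word DDk DD0).
have -> : uniq (map g (rev (enum 'I_N))) = injectiveb g.
  by rewrite map_rev rev_uniq.
case: (boolP (injectiveb g)) => // /injectiveP Hg.
congr (_ *: _); apply: eq_bigl => k.
by rewrite map_rev mem_rev -codomE injF_onto.
Qed.

Lemma AN_DN n : (n <= N)%N ->
  A ^+ n * \prod_(m <- rev (iota 0 n)) Dm (inord m)
  = (\prod_(m <- iota 0 n) (rr (inord m) ^+ m.+1)^-1) *: \prod_(m <- rev (iota 0 n)) Cj (inord m).
Proof.
elim: n => [|n IH] Hn; first by rewrite /= !big_nil expr0 mul1r scale1r.
rewrite prod_iotaS rev_iotaS !big_cons.
rewrite (mulrA (A ^+ n.+1)) AkD scAl (exprS A) (mulrA (Dm _) A) -CD.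
rewrite -(mulrA (Cj _)) IH ?(ltnW Hn) // scAr scalerA mulrC.
by [].
Qed.

Lemma prod_ord_nat (T : pzSemiRingType) (G : 'I_N -> T) :
  \prod_(k <- rev (enum 'I_N)) G k = \prod_(m <- rev (iota 0 N)) G (inord m).
Proof.
rewrite -(prod_enum_nat N (fun m => G (inord m))).
by apply: eq_bigr => k _; rewrite inord_val.
Qed.

Lemma Cprod_big : Cprod Cj = \prod_(k <- rev (enum 'I_N)) Cj k.
Proof.
rewrite /Cprod; elim: (rev (enum 'I_N)) => [|k l IH] /=; first by rewrite big_nil.
by rewrite big_cons IH.
Qed.

Lemma AN_DN' : A ^+ N * DN
  = (\prod_(m <- iota 0 N) (rr (inord m) ^+ m.+1)^-1) *: Cprod Cj.
Proof. by rewrite /DN Cprod_big !prod_ord_nat AN_DN. Qed.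

Lemma W4sum :
  \sum_(g : {ffun 'I_N -> 'I_N})
      (\prod_(j <- rev (enum 'I_N)) rr (g j) ^+ x j) *: \prod_(j <- rev (enum 'I_N)) Dm (g j)
  = \sum_(s : 'S_N) (rho thN (map s (rev (enum 'I_N)))
                        * \prod_(j <- rev (enum 'I_N)) rr (s j) ^+ x j) *: DN.
Proof.
rewrite (eq_bigr (fun g : {ffun 'I_N -> 'I_N} => (\prod_(j <- rev (enum 'I_N)) rr (g j) ^+ x j) *:
   (if injectiveb g then rho thN (map g (rev (enum 'I_N))) *: DN else 0))); last first.
  by move=> g _; rewrite W4.
rewrite (bigID (fun g : {ffun 'I_N -> 'I_N} => injectiveb g)) /=.
rewrite [X in _ + X]big1 ?addr0; last by move=> g /negbTE ->; rewrite scaler0.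
rewrite (reindex (@pval _)) /=; last first.
  pose in_Sn := insubd (1%g : 'S_N).
  by exists in_Sn => /= g Ug; first apply: val_inj; apply: insubdK.
apply: eq_big => [s | s _]; first by rewrite (valP s).
by rewrite (valP s) pvalE scalerA mulrC.
Qed.


Lemma final (hNM : (N <= M)%N) :
  Bvec t a b c d e f u N (config M x)
  = (\prod_(m <- iota 0 N) (rr (inord m) ^+ m.+1)^-1)
    * (A ^+ (M - N) * Cprod Cj) (ord0n N) (ordLn N)
    * \sum_(s : 'S_N) (rho thN (map s (rev (enum 'I_N)))
                        * \prod_(j <- rev (enum 'I_N)) rr (s j) ^+ x j).
Proof.
rewrite P1 /Wn.
have -> : \prod_(s <- rev (enum 'I_M)) Sn t a b c d e f u N (config M x s)
          = \prod_(m <- rev (iota 0 M)) Xs m.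
  by rewrite -prod_enum_nat; apply: eq_bigr => s _; rewrite /Sn /Xs ffunE.
rewrite W1 W2 W3 W4sum mulr_sumr summxE mulr_sumr.
apply: eq_bigr => s _.
have EM : A ^+ M = A ^+ (M - N) * A ^+ N by rewrite -exprD subnK.
rewrite scAr EM -mulrA AN_DN' scAr scalerA !mxE.
ring.
Qed.

End Main.
Lemma trQ (R : numClosedFieldType) n (Z : 'M[R]_(2 ^ n)) :
  \tr (Qmx n *m Z) = Z (ord0n n) (ordLn n).
Proof.
rewrite /mxtrace (bigD1 (ordLn n)) //= [X in _ + X]big1 ?addr0; last first.
  move=> i Hi; rewrite mxE big1 // => k _; rewrite mxE.
  have /negbTE -> : (i : nat) != (2 ^ n).-1.
    by move: Hi; apply: contra => /eqP H; apply/eqP/val_inj.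
  by rewrite mul0r.
rewrite mxE (bigD1 (ord0n n)) //= big1 ?addr0; last first.
  move=> k Hk; rewrite mxE.
  have /negbTE -> : (k : nat) != 0%N.
    by move: Hk; apply: contra => /eqP H; apply/eqP/val_inj.
  by rewrite andbF mul0r.
by rewrite mxE !eqxx mul1r.
Qed.

Lemma mxpowE (R : numClosedFieldType) p (X : 'M[R]_p) k : mxpow X k = X ^+ k.
Proof. by elim: k => [|k IH] //=; rewrite /mxpow /= in IH *; rewrite IH exprS. Qed.

Unset Implicit Arguments.

Theorem mainTheorem3 (R : numClosedFieldType) (t a b c d e f : R)
  (ht0 : t != 0) (ha : a != 0) (hb : b != 0) (hc : c != 0) (hd : d != 0)
  (he : e != 0) (hf : f != 0) (ht1 : t != 1)
  (hcd1 : c * d + a * f = 0) (hcd2 : t * c * d + b * e = 0)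
  (M N : nat) (hN1 : (1 <= N)%N) (hNM : (N <= M)%N)
  (u : nat -> R)
  (hdist : forall j k : 'I_N, j != k -> u j != u k)
  (hab : forall j : 'I_N, a * u j + b != 0)
  (hef : forall j : 'I_N, e * u j + f != 0)
  (htu : forall j k : 'I_N, j != k -> t * u j != u k)
  (Cj : 'I_N -> 'M[R]_(2 ^ N))
  (hsum : \sum_(j < N) Cj j = Cmx t a b c d e f u N)
  (hCA : forall j : 'I_N,
     Cj j *m Amx t a b c d e f u N
     = ((e * u j + f) / (a * u j + b)) *: (Amx t a b c d e f u N *m Cj j))
  (hCC : forall j : 'I_N, Cj j *m Cj j = 0)
  (hCjk : forall j k : 'I_N, j != k ->
     Cj j *m Cj k
     = ((e * u j + f) * (a * u k + b) * (u j - t * u k)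
        / ((a * u j + b) * (e * u k + f) * (t * u j - u k))) *: (Cj k *m Cj j))
  (x : 'I_N -> nat)
  (hx1 : forall j : 'I_N, (1 <= x j <= M)%N)
  (hxinc : forall j k : 'I_N, (j < k)%N -> (x j < x k)%N) :
  let K := (\prod_(j < N) ((a * u j + b) / (e * u j + f)) ^+ j.+1)
           * \tr (Qmx N *m mxpow (Amx t a b c d e f u N) (M - N) *m Cprod Cj) in
  Bvec t a b c d e f u N (config M x)
  = K * \sum_(s : 'S_N)
          ((\prod_(jk : 'I_N * 'I_N | (jk.1 < jk.2)%N && (s jk.2 < s jk.1)%N)
              ((u (s jk.2) - t * u (s jk.1)) / (t * u (s jk.2) - u (s jk.1))))
           * \prod_(j < N) ((e * u (s j) + f) / (a * u (s j) + b)) ^+ (x j)).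
Proof.
move=> K; rewrite /K {K}.
destruct N as [|N']; first by [].
rewrite (final hab hef htu hCA hCC hCjk hsum hx1 hxinc hNM).
rewrite -mulmxA trQ mxpowE.
congr (_ * _ * _).
  have -> : iota 0 N'.+1 = index_iota 0 N'.+1 by rewrite /index_iota subn0.
  rewrite big_mkord.
  apply: eq_bigr => j _; rewrite inord_val /rr -exprVn invf_div.
  by [].
apply: eq_bigr => s _; rewrite rho_perm; congr (_ * _).
by rewrite big_rev -index_enum_enum.
Qed.
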